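(* Let $n\ge1$ and $y=(y_1,\dots,y_{2n})\in\mathbb Z^{2n}$ with $y_1<y_2<\dots<y_{2n}$. Then for every $\eta\in\{0,1\}^{\mathbb Z}$, \[ \mathcal L\,\Sigma_y(\eta)=\sum_{i=1}^{2n}L_{y_i}\Sigma_y(\eta), \] where $L_{y_i}$ denotes the operator $L$ acting on the variable $y_i$ of $y\mapsto\Sigma_y(\eta)$.
   Context: Fix $\theta\in[0,1]$ and uniformly bounded nonnegative rates $(p_x,q_x)_{x\in\mathbb Z}$. $\mathcal L$ is the generator acting on $F:\{0,1\}^{\mathbb Z}\to\mathbb R$ depending on finitely many coordinates by $\mathcal L F(\eta)=\sum_{x}q_x\big(\theta F(\eta^a_{x,x-1})+(1-\theta)F(\eta^c_{x,x-1})-F(\eta)\big)+\sum_x p_x\big(\theta F(\eta^a_{x-1,x})+(1-\theta)F(\eta^c_{x-1,x})-F(\eta)\big)$, where for $x\ne y$, $\eta^a_{x,y},\eta^c_{x,y}$ agree with $\eta$ off $\{x,y\}$, vanish at $x$, and $\eta^a_{x,y}(y)=(\eta(x)+\eta(y))\bmod2$, $\eta^c_{x,y}(y)=\min\{1,\eta(x)+\eta(y)\}$. The one-particle operator is $Lf(x)=q_xD^+f(x)+p_xD^-f(x)$ for $f:\mathbb Z\to\mathbb R$, where $D^+f(x)=f(x+1)-f(x)$, $D^-f(x)=f(x-1)-f(x)$. For $y\le z$, $\eta[y,z)=\sum_{y\le x<z}\eta(x)$ ($=0$ if $y=z$), $\sigma_{y,z}(\eta)=(-\theta)^{\eta[y,z)}$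 with $0^0=1$, and for $y_1\le\dots\le y_{2n}$, $\Sigma_y(\eta)=\prod_{i=1}^n\sigma_{y_{2i-1},y_{2i}}(\eta)$. *)

(* Defs.v *)
From Stdlib Require Import Reals ZArith Lia.
From Coquelicot Require Import Coquelicot.
Open Scope R_scope.

(* configurations eta in {0,1}^Z, encoded as Z -> bool (true = 1) *)
Definition config := Z -> bool.

Definition b2R (b : bool) : R := if b then 1 else 0.

(* eta^a_{x,y} : annihilating move of the particle at x onto y *)
Definition eta_a (eta : config) (x y : Z) : config :=
  fun z => if Z.eqb z x then false
           else if Z.eqb z y then xorb (eta x) (eta y)
           else eta z.

(* eta^c_{x,y} : coalescing move of the particle at x onto y *)
Definition eta_c (eta : config) (x y : Z) : config :=
  fun z => if Z.eqb z x then false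
           else if Z.eqb z y then orb (eta x) (eta y)
           else eta z.

Fixpoint sum_from (f : nat -> R) (a len : nat) : R :=
  match len with
  | O => 0
  | S k => f a + sum_from f (S a) k
  end.
Definition sumR (f : nat -> R) (a b : nat) : R := sum_from f a (S b - a).

Fixpoint prod_from (f : nat -> R) (a len : nat) : R :=
  match len with
  | O => 1
  | S k => f a * prod_from f (S a) k
  end.
Definition prodR (f : nat -> R) (a b : nat) : R := prod_from f a (S b - a).

Definition zpartial (g : Z -> R) (N : nat) : R :=
  sum_from (fun k => g (Z.of_nat k - Z.of_nat N)%Z) 0 (S (2 * N)).

Definition zsum (g : Z -> R) : R := real (Lim_seq (zpartial g)).

Definition gen (theta : R) (p q : Z -> R) (F : config -> R) (eta : config) : R :=
  zsum (fun x => q x * (theta * F (eta_a eta x (x - 1)%Z)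
                        + (1 - theta) * F (eta_c eta x (x - 1)%Z) - F eta))
  + zsum (fun x => p x * (theta * F (eta_a eta (x - 1)%Z x)
                        + (1 - theta) * F (eta_c eta (x - 1)%Z x) - F eta)).

Definition Lone (p q : Z -> R) (f : Z -> R) (x : Z) : R :=
  q x * (f (x + 1)%Z - f x) + p x * (f (x - 1)%Z - f x).

(* eta[y,z) = number of particles in [y,z) (0 if z <= y) *)
Definition occ (eta : config) (y z : Z) : nat :=
  List.fold_right (fun k acc => (Nat.b2n (eta (y + Z.of_nat k)%Z) + acc)%nat) 0%nat
    (List.seq 0 (Z.to_nat (z - y))).

(* sigma_{y,z}(eta) = (-theta)^{eta[y,z)}, with 0^0 = 1 (Stdlib pow) *)
Definition sigma (theta : R) (y z : Z) (eta : config) : R :=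
  pow (- theta) (occ eta y z).

(* Sigma_y(eta) = prod_{i=1}^n sigma_{y_{2i-1}, y_{2i}}(eta); y indexed 1..2n *)
Definition Sigma (theta : R) (n : nat) (y : nat -> Z) (eta : config) : R :=
  prodR (fun i => sigma theta (y (2 * i - 1)%nat) (y (2 * i)%nat) eta) 1 n.

Definition upd (y : nat -> Z) (i : nat) (v : Z) : nat -> Z :=
  fun j => if Nat.eqb j i then v else y j.

Definition L_on_var (theta : R) (p q : Z -> R) (n : nat) (y : nat -> Z) (i : nat)
  (eta : config) : R :=
  Lone p q (fun v => Sigma theta n (upd y i v) eta) (y i).

(* Main.v *)
Require Import Defs.
From Stdlib Require Import Reals ZArith Lia Lra List Classical FunctionalExtensionality.
From Coquelicot Require Import Coquelicot.
Open Scope R_scope.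

Fixpoint nsum (f : nat -> nat) (a len : nat) : nat :=
  match len with O => 0%nat | S k => (f a + nsum f (S a) k)%nat end.

Lemma nsum_ext f g a len : (forall k, (a <= k < a + len)%nat -> f k = g k) ->
  nsum f a len = nsum g a len.
Proof. revert a; induction len; intros a H; simpl; auto.
 rewrite H by lia. rewrite (IHlen (S a)); auto. intros; apply H; lia. Qed.

Lemma nsum_add f g a len : nsum (fun k => f k + g k)%nat a len = (nsum f a len + nsum g a len)%nat.
Proof. revert a; induction len; intros; simpl; auto. rewrite IHlen; lia. Qed.

Lemma nsum_mul c f a len : nsum (fun k => f k * c)%nat a len = (nsum f a len * c)%nat.
Proof. revert a; induction len; intros; simpl; try lia. rewrite IHlen; lia. Qed.

Lemma nsum_last f a len : nsum f a (S len) = (nsum f a len + f (a + len))%nat.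
Proof. revert a; induction len; intros a.
 - simpl. rewrite !Nat.add_0_r; lia.
 - change (nsum f a (S (S len))) with (f a + nsum f (S a) (S len))%nat.
   rewrite IHlen. simpl. replace (S (a + len)) with (a + S len)%nat by lia. lia. Qed.

Lemma nsum_replace f g a len i : (a <= i < a + len)%nat ->
  (forall k, (a <= k < a + len)%nat -> k <> i -> f k = g k) ->
  (nsum f a len + g i = nsum g a len + f i)%nat.
Proof. revert a; induction len; intros a Hi H; simpl; [lia|].
  destruct (Nat.eq_dec a i).
  - subst. rewrite (nsum_ext f g (S i) len). lia. intros; apply H; lia.
  - rewrite H by lia. specialize (IHlen (S a)). rewrite <- !Nat.add_assoc. rewrite IHlen. lia. lia.
    intros; apply H; lia. Qed.

Lemma sum_from_ext f g a len : (forall k, (a <= k < a + len)%nat -> f k = g k) ->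
  sum_from f a len = sum_from g a len.
Proof. revert a; induction len; intros a H; simpl; auto.
 rewrite H by lia. rewrite (IHlen (S a)); auto. intros; apply H; lia. Qed.

Lemma sum_from_plus f g a len : sum_from (fun k => f k + g k) a len = sum_from f a len + sum_from g a len.
Proof. revert a; induction len; intros; simpl. lra. rewrite IHlen; lra. Qed.

Lemma sum_from_zero f a len : (forall k, (a <= k < a + len)%nat -> f k = 0) -> sum_from f a len = 0.
Proof. revert a; induction len; intros a H; simpl; auto.
 rewrite H by lia. rewrite IHlen. lra. intros; apply H; lia. Qed.

Lemma sum_from_one f a len j : (a <= j < a + len)%nat ->
  (forall k, (a <= k < a + len)%nat -> k <> j -> f k = 0) -> sum_from f a len = f j.
Proof. revert a; induction len; intros a Hj H; simpl; [lia|].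
  destruct (Nat.eq_dec a j).
  - subst. rewrite sum_from_zero. lra. intros; apply H; lia.
  - rewrite H by lia. rewrite IHlen. lra. lia. intros; apply H; lia. Qed.

Lemma prod_from_pow r g a len : prod_from (fun i => r ^ g i) a len = r ^ nsum g a len.
Proof. revert a; induction len; intros; simpl. auto. rewrite IHlen, pow_add. auto. Qed.

Fixpoint occN (eta : config) (s : Z) (m : nat) : nat :=
  match m with O => O | S m => (Nat.b2n (eta s) + occN eta (s+1)%Z m)%nat end.

Lemma fold_shift (eta: config) a m s :
  List.fold_right (fun k acc => (Nat.b2n (eta (a + Z.of_nat k)%Z) + acc)%nat) 0%nat (List.seq s m)
  = occN eta (a + Z.of_nat s)%Z m.
Proof. revert s; induction m; intros s; simpl; auto. rewrite IHm. f_equal. f_equal. lia. Qed.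

Lemma occ_occN eta a b : occ eta a b = occN eta a (Z.to_nat (b - a)).
Proof. unfold occ. rewrite fold_shift. simpl. rewrite Z.add_0_r. auto. Qed.

Definition indN (c s : Z) (m : nat) : nat :=
  if (Z.leb s c && Z.ltb c (s + Z.of_nat m))%bool then 1%nat else 0%nat.

Lemma indN_0 c s : indN c s 0 = 0%nat.
Proof. unfold indN. destruct (Z.leb_spec s c), (Z.ltb_spec c (s + Z.of_nat 0)); simpl; auto; lia. Qed.

Lemma indN_S c s m : indN c s (S m) = ((if Z.eqb c s then 1 else 0) + indN c (s+1) m)%nat.
Proof. unfold indN. destruct (Z.eqb_spec c s);
  destruct (Z.leb_spec s c), (Z.ltb_spec c (s + Z.of_nat (S m))),
   (Z.leb_spec (s+1) c), (Z.ltb_spec c (s + 1 + Z.of_nat m)); simpl; auto; lia. Qed.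

Lemma occN_decomp (e z: config) (x : Z) s m :
  (forall w, w <> x -> w <> (x-1)%Z -> e w = z w) -> z x = false -> z (x-1)%Z = false ->
  occN e s m = (occN z s m + Nat.b2n (e (x-1)%Z) * indN (x-1) s m + Nat.b2n (e x) * indN x s m)%nat.
Proof.
  intros H1 H2 H3. revert s; induction m; intros s.
  - simpl. rewrite !indN_0. lia.
  - cbn [occN]. rewrite IHm, !indN_S.
    destruct (Z.eqb_spec x s); [subst s; rewrite H2; destruct (Z.eqb_spec (x-1) x); [lia|];
       destruct (e x), (e (x-1)%Z); simpl; lia|].
    destruct (Z.eqb_spec (x-1) s); [subst s; rewrite H3; destruct (e x), (e (x-1)%Z); simpl; lia|].
    rewrite H1 by auto. lia. Qed.

Definition inI (c a b : Z) : nat := if (Z.leb a c && Z.ltb c b)%bool then 1%nat else 0%nat.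

Lemma indN_inI c a b : indN c a (Z.to_nat (b-a)) = inI c a b.
Proof. unfold indN, inI. destruct (Z.le_gt_cases a b).
  - rewrite Z2Nat.id by lia. replace (a + (b-a))%Z with b by ring. auto.
  - replace (Z.to_nat (b-a)) with 0%nat by lia.
    destruct (Z.leb_spec a c), (Z.ltb_spec c (a + Z.of_nat 0)), (Z.ltb_spec c b); simpl; auto; lia. Qed.

Lemma occ_decomp (e z: config) (x : Z) a b :
  (forall w, w <> x -> w <> (x-1)%Z -> e w = z w) -> z x = false -> z (x-1)%Z = false ->
  occ e a b = (occ z a b + Nat.b2n (e (x-1)%Z) * inI (x-1) a b + Nat.b2n (e x) * inI x a b)%nat.
Proof. intros. rewrite !occ_occN, <- !indN_inI. apply occN_decomp; auto. Qed.

Lemma occN_last e s m : occN e s (S m) = (occN e s m + Nat.b2n (e (s + Z.of_nat m)%Z))%nat.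
Proof. revert s; induction m; intros s.
  - simpl. rewrite Z.add_0_r. lia.
  - change (occN e s (S (S m))) with (Nat.b2n (e s) + occN e (s+1)%Z (S m))%nat.
    rewrite IHm. simpl. replace (s + 1 + Z.of_nat m)%Z with (s + Z.pos (Pos.of_succ_nat m))%Z by lia. lia. Qed.

Lemma occ_left e a b : (a < b)%Z -> occ e a b = (Nat.b2n (e a) + occ e (a+1) b)%nat.
Proof. intros. rewrite !occ_occN. replace (Z.to_nat (b - a)) with (S (Z.to_nat (b - (a+1)))) by lia.
  reflexivity. Qed.

Lemma occ_right e a b : (a <= b)%Z -> occ e a (b+1) = (occ e a b + Nat.b2n (e b))%nat.
Proof. intros. rewrite !occ_occN. replace (Z.to_nat (b + 1 - a)) with (S (Z.to_nat (b - a))) by lia.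
  rewrite occN_last. f_equal. f_equal. f_equal. lia. Qed.
Definition E (n : nat) (y : nat -> Z) (e : config) : nat :=
  nsum (fun i => occ e (y (2*i-1)%nat) (y (2*i)%nat)) 1 n.

Lemma Sigma_pow theta n y e : Sigma theta n y e = (- theta) ^ (E n y e).
Proof. unfold Sigma, prodR, E, sigma. replace (S n - 1)%nat with n by lia. apply prod_from_pow. Qed.

Definition clr2 (e : config) (x : Z) : config :=
  fun w => if Z.eqb w x then false else if Z.eqb w (x-1) then false else e w.

Definition alpha n (y : nat -> Z) z := nsum (fun i => inI z (y (2*i-1)%nat) (y (2*i)%nat)) 1 n.

Lemma E_decomp n y (e e' : config) x :
  (forall w, w <> x -> w <> (x-1)%Z -> e' w = e w) ->
  E n y e' = (E n y (clr2 e x) + Nat.b2n (e' (x-1)%Z) * alpha n y (x-1)%Z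
              + Nat.b2n (e' x) * alpha n y x)%nat.
Proof. intros H. unfold E, alpha.
  rewrite (nsum_ext _ (fun k => ((occ (clr2 e x) (y (2*k-1)%nat) (y (2*k)%nat)
      + inI (x-1) (y (2*k-1)%nat) (y (2*k)%nat) * Nat.b2n (e' (x-1)%Z))
      + inI x (y (2*k-1)%nat) (y (2*k)%nat) * Nat.b2n (e' x))%nat)).
  - rewrite !nsum_add, !nsum_mul. lia.
  - intros k _. rewrite (occ_decomp e' (clr2 e x) x).
    + lia.
    + intros w H1 H2. unfold clr2. rewrite (proj2 (Z.eqb_neq _ _) H1), (proj2 (Z.eqb_neq _ _) H2). auto.
    + unfold clr2. rewrite Z.eqb_refl. auto.
    + unfold clr2. destruct (Z.eqb_spec (x-1) x); [lia|]. rewrite Z.eqb_refl. auto.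
Qed.

Lemma mono n (y : nat -> Z) :
  (forall i, (1 <= i)%nat -> (i < 2 * n)%nat -> (y i < y (S i))%Z) ->
  forall j i, (1 <= i)%nat -> (i < j)%nat -> (j <= 2 * n)%nat -> (y i < y j)%Z.
Proof. intros Hy j; induction j; intros i H1 H2 H3; [lia|].
  destruct (Nat.eq_dec i j). subst; apply Hy; lia.
  specialize (IHj i ltac:(lia) ltac:(lia) ltac:(lia)). specialize (Hy j ltac:(lia) ltac:(lia)). lia. Qed.

Lemma inj n (y : nat -> Z) :
  (forall i, (1 <= i)%nat -> (i < 2 * n)%nat -> (y i < y (S i))%Z) ->
  forall i j, (1 <= i <= 2*n)%nat -> (1 <= j <= 2*n)%nat -> y i = y j -> i = j.
Proof. intros Hy i j Hi Hj E0. destruct (Nat.lt_total i j) as [h|[h|h]]; auto.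
  - pose proof (mono n y Hy j i ltac:(lia) h ltac:(lia)). lia.
  - pose proof (mono n y Hy i j ltac:(lia) h ltac:(lia)). lia. Qed.

Lemma inI01 c a b : inI c a b = 0%nat \/ (inI c a b = 1%nat /\ (a <= c < b)%Z).
Proof. unfold inI. destruct (Z.leb_spec a c), (Z.ltb_spec c b); simpl; auto. Qed.

Lemma inI_0 c a b : ~ (a <= c < b)%Z -> inI c a b = 0%nat.
Proof. intros. unfold inI. destruct (Z.leb_spec a c), (Z.ltb_spec c b); simpl; auto. lia. Qed.
Lemma inI_1 c a b : (a <= c < b)%Z -> inI c a b = 1%nat.
Proof. intros. unfold inI. destruct (Z.leb_spec a c), (Z.ltb_spec c b); simpl; auto; lia. Qed.

Lemma inI_eq c d a b : ((a <= c < b)%Z <-> (a <= d < b)%Z) -> inI c a b = inI d a b.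
Proof. intros H. unfold inI. destruct (Z.leb_spec a c), (Z.ltb_spec c b), (Z.leb_spec a d), (Z.ltb_spec d b);
  simpl; auto; exfalso; tauto || (destruct H; lia). Qed.

Lemma alpha_le1 n (y : nat -> Z) :
  (forall i, (1 <= i)%nat -> (i < 2 * n)%nat -> (y i < y (S i))%Z) ->
  forall z, (alpha n y z <= 1)%nat.
Proof. intros Hy z.
  assert (forall m, (m <= n)%nat -> (nsum (fun i => inI z (y (2*i-1)%nat) (y (2*i)%nat)) 1 m <= 1)%nat /\
     ((1 <= m)%nat -> (y (2*m)%nat <= z)%Z -> nsum (fun i => inI z (y (2*i-1)%nat) (y (2*i)%nat)) 1 m = 0%nat)).
  { induction m; intros Hm. simpl. lia.
    destruct (IHm ltac:(lia)) as [IH1 IH2]. rewrite nsum_last.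
    replace (1 + m)%nat with (S m) by lia.
    destruct (inI01 z (y (2 * S m - 1)%nat) (y (2 * S m)%nat)) as [h|[h1 h2]]; rewrite ?h, ?h1.
    - split. lia. intros _ Hz. destruct m. reflexivity.
      rewrite IH2. auto. lia. pose proof (mono n y Hy (2 * S (S m))%nat (2 * S m)%nat ltac:(lia) ltac:(lia) ltac:(lia)). lia.
    - split.
      + destruct m. simpl; lia. rewrite IH2. lia. lia.
        pose proof (mono n y Hy (2 * S (S m) - 1)%nat (2 * S m)%nat ltac:(lia) ltac:(lia) ltac:(lia)). lia.
      + intros _ Hz. lia. }
  apply H; lia. Qed.

Lemma alpha_none n (y : nat -> Z) x :
  (forall j, (1 <= j <= 2*n)%nat -> y j <> x) -> alpha n y (x-1)%Z = alpha n y x.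
Proof. intros H. unfold alpha. apply nsum_ext. intros k Hk.
  pose proof (H (2*k-1)%nat ltac:(lia)). pose proof (H (2*k)%nat ltac:(lia)).
  apply inI_eq; split; lia. Qed.

Lemma alpha_odd n (y : nat -> Z) x i :
  (forall i, (1 <= i)%nat -> (i < 2 * n)%nat -> (y i < y (S i))%Z) ->
  (1 <= i <= n)%nat -> y (2*i-1)%nat = x -> alpha n y (x-1)%Z = 0%nat /\ alpha n y x = 1%nat.
Proof. intros Hy Hi Hx.
  assert (nsum (fun i => inI x (y (2*i-1)%nat) (y (2*i)%nat)) 1 n + inI (x-1) (y (2*i-1)%nat) (y (2*i)%nat)
     = nsum (fun i => inI (x-1) (y (2*i-1)%nat) (y (2*i)%nat)) 1 n + inI x (y (2*i-1)%nat) (y (2*i)%nat))%nat.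
  { apply (nsum_replace (fun i => inI x (y (2*i-1)%nat) (y (2*i)%nat)) (fun i => inI (x-1) (y (2*i-1)%nat) (y (2*i)%nat)) 1 n i). lia. intros k Hk Hki.
    assert (y (2*k-1)%nat <> x). { intro h. rewrite <- Hx in h. apply (inj n y Hy) in h; lia. }
    assert (y (2*k)%nat <> x). { intro h. rewrite <- Hx in h. apply (inj n y Hy) in h; lia. }
    apply inI_eq; split; lia. }
  pose proof (mono n y Hy (2*i)%nat (2*i-1)%nat ltac:(lia) ltac:(lia) ltac:(lia)).
  rewrite (inI_0 (x-1)), (inI_1 x) in H by lia.
  pose proof (alpha_le1 n y Hy x). unfold alpha in *. lia. Qed.

Lemma alpha_even n (y : nat -> Z) x i :
  (forall i, (1 <= i)%nat -> (i < 2 * n)%nat -> (y i < y (S i))%Z) ->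
  (1 <= i <= n)%nat -> y (2*i)%nat = x -> alpha n y (x-1)%Z = 1%nat /\ alpha n y x = 0%nat.
Proof. intros Hy Hi Hx.
  assert (nsum (fun i => inI x (y (2*i-1)%nat) (y (2*i)%nat)) 1 n + inI (x-1) (y (2*i-1)%nat) (y (2*i)%nat)
     = nsum (fun i => inI (x-1) (y (2*i-1)%nat) (y (2*i)%nat)) 1 n + inI x (y (2*i-1)%nat) (y (2*i)%nat))%nat.
  { apply (nsum_replace (fun i => inI x (y (2*i-1)%nat) (y (2*i)%nat)) (fun i => inI (x-1) (y (2*i-1)%nat) (y (2*i)%nat)) 1 n i). lia. intros k Hk Hki.
    assert (y (2*k-1)%nat <> x). { intro h. rewrite <- Hx in h. apply (inj n y Hy) in h; lia. }
    assert (y (2*k)%nat <> x). { intro h. rewrite <- Hx in h. apply (inj n y Hy) in h; lia. }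
    apply inI_eq; split; lia. }
  pose proof (mono n y Hy (2*i)%nat (2*i-1)%nat ltac:(lia) ltac:(lia) ltac:(lia)).
  rewrite (inI_1 (x-1)), (inI_0 x) in H by lia.
  pose proof (alpha_le1 n y Hy (x-1)%Z). unfold alpha in *. lia. Qed.

Lemma E_upd_odd n y e i v : (1 <= i <= n)%nat ->
  (E n (upd y (2*i-1) v) e + occ e (y (2*i-1)%nat) (y (2*i)%nat)
   = E n y e + occ e v (y (2*i)%nat))%nat.
Proof. intros Hi. unfold E.
  assert (Hv : occ e (upd y (2*i-1) v (2*i-1)%nat) (upd y (2*i-1) v (2*i)%nat) = occ e v (y (2*i)%nat)).
  { unfold upd. rewrite Nat.eqb_refl. destruct (Nat.eqb_spec (2*i) (2*i-1)); [lia|]. auto. }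
  rewrite <- Hv.
  apply (nsum_replace (fun k => occ e (upd y (2*i-1) v (2*k-1)%nat) (upd y (2*i-1) v (2*k)%nat))
     (fun k => occ e (y (2*k-1)%nat) (y (2*k)%nat)) 1 n i) ; [lia|].
  - intros k Hk Hki. unfold upd.
    destruct (Nat.eqb_spec (2*k-1) (2*i-1)); [lia|]. destruct (Nat.eqb_spec (2*k) (2*i-1)); [lia|]. auto.
Qed.

Lemma E_upd_even n y e i v : (1 <= i <= n)%nat ->
  (E n (upd y (2*i) v) e + occ e (y (2*i-1)%nat) (y (2*i)%nat)
   = E n y e + occ e (y (2*i-1)%nat) v)%nat.
Proof. intros Hi. unfold E.
  assert (Hv : occ e (upd y (2*i) v (2*i-1)%nat) (upd y (2*i) v (2*i)%nat) = occ e (y (2*i-1)%nat) v).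
  { unfold upd. rewrite Nat.eqb_refl. destruct (Nat.eqb_spec (2*i-1) (2*i)); [lia|]. auto. }
  rewrite <- Hv.
  apply (nsum_replace (fun k => occ e (upd y (2*i) v (2*k-1)%nat) (upd y (2*i) v (2*k)%nat))
     (fun k => occ e (y (2*k-1)%nat) (y (2*k)%nat)) 1 n i) ; [lia|].
  - intros k Hk Hki. unfold upd.
    destruct (Nat.eqb_spec (2*k-1) (2*i)); [lia|]. destruct (Nat.eqb_spec (2*k) (2*i)); [lia|]. auto.
Qed.

Lemma eta_a_src e u v : eta_a e u v u = false.
Proof. unfold eta_a. rewrite Z.eqb_refl. auto. Qed.
Lemma eta_a_tgt e u v : u <> v -> eta_a e u v v = xorb (e u) (e v).
Proof. intros. unfold eta_a. rewrite Z.eqb_refl. destruct (Z.eqb_spec v u); congruence. Qed.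
Lemma eta_a_oth e u v w : w <> u -> w <> v -> eta_a e u v w = e w.
Proof. intros. unfold eta_a. destruct (Z.eqb_spec w u), (Z.eqb_spec w v); congruence. Qed.
Lemma eta_c_src e u v : eta_c e u v u = false.
Proof. unfold eta_c. rewrite Z.eqb_refl. auto. Qed.
Lemma eta_c_tgt e u v : u <> v -> eta_c e u v v = orb (e u) (e v).
Proof. intros. unfold eta_c. rewrite Z.eqb_refl. destruct (Z.eqb_spec v u); congruence. Qed.
Lemma eta_c_oth e u v w : w <> u -> w <> v -> eta_c e u v w = e w.
Proof. intros. unfold eta_c. destruct (Z.eqb_spec w u), (Z.eqb_spec w v); congruence. Qed.

Lemma pow_split r K m : r ^ (K + m) = r ^ K * r ^ m.
Proof. apply pow_add. Qed.

Lemma core_q theta (q : Z -> R) n y eta x :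
  (forall i, (1 <= i)%nat -> (i < 2 * n)%nat -> (y i < y (S i))%Z) ->
  q x * (theta * Sigma theta n y (eta_a eta x (x-1)%Z) + (1-theta) * Sigma theta n y (eta_c eta x (x-1)%Z)
         - Sigma theta n y eta)
  = sum_from (fun j => if Z.eqb (y j) x then
       q (y j) * (Sigma theta n (upd y j (y j + 1)%Z) eta - Sigma theta n y eta) else 0) 1 (2*n).
Proof.
  intros Hy.
  set (K := E n y (clr2 eta x)).
  pose proof (E_decomp n y eta eta x (fun _ _ _ => eq_refl)) as H0.
  pose proof (E_decomp n y eta (eta_a eta x (x-1)) x (fun w h1 h2 => eta_a_oth eta x (x-1) w h1 h2)) as Ha.
  pose proof (E_decomp n y eta (eta_c eta x (x-1)) x (fun w h1 h2 => eta_c_oth eta x (x-1) w h1 h2)) as Hc.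
  rewrite eta_a_src, eta_a_tgt in Ha by lia. rewrite eta_c_src, eta_c_tgt in Hc by lia.
  fold K in H0, Ha, Hc.
  rewrite !Sigma_pow.
  destruct (classic (exists j, (1 <= j <= 2*n)%nat /\ y j = x)) as [[j [Hj Hx]]|Hno].
  - rewrite (sum_from_one _ 1 (2*n) j) by
      (try lia; intros k Hk Hkj; destruct (Z.eqb_spec (y k) x); auto;
       exfalso; apply Hkj; apply (inj n y Hy); lia).
    rewrite Hx, Z.eqb_refl, !Sigma_pow.
    destruct (Nat.Even_or_Odd j) as [[i Hi]|[i Hi]].
    + subst j. destruct (alpha_even n y x i Hy ltac:(lia) Hx) as [A1 A0].
      rewrite A1, A0 in *.
      pose proof (E_upd_even n y eta i (x+1) ltac:(lia)) as HU.
      rewrite Hx in HU. rewrite occ_right in HU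
        by (pose proof (mono n y Hy (2*i)%nat (2*i-1)%nat ltac:(lia) ltac:(lia) ltac:(lia)); lia).
      assert (HU' : E n (upd y (2 * i) (x + 1)) eta = (K + (Nat.b2n (eta (x-1)%Z) + Nat.b2n (eta x)))%nat) by lia.
      rewrite HU', Ha, Hc, H0, !pow_split.
      destruct (eta x), (eta (x-1)%Z); simpl; ring.
    + subst j. replace (2*i+1)%nat with (2*(S i)-1)%nat in * by lia.
      destruct (alpha_odd n y x (S i) Hy ltac:(lia) Hx) as [A1 A0].
      rewrite A1, A0 in *.
      pose proof (E_upd_odd n y eta (S i) (x+1) ltac:(lia)) as HU.
      rewrite Hx in HU. rewrite occ_left in HU
        by (pose proof (mono n y Hy (2*S i)%nat (2*S i-1)%nat ltac:(lia) ltac:(lia) ltac:(lia)); lia).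
      assert (HU' : E n (upd y (2 * S i - 1) (x + 1)) eta = K) by lia.
      rewrite HU', Ha, Hc, H0, !pow_split.
      destruct (eta x), (eta (x-1)%Z); simpl; ring.
  - rewrite sum_from_zero.
    2:{ intros k Hk. destruct (Z.eqb_spec (y k) x); auto. exfalso; apply Hno; exists k; split; auto; lia. }
    assert (HA : alpha n y (x-1)%Z = alpha n y x)
      by (apply alpha_none; intros j Hj h; apply Hno; exists j; auto).
    rewrite HA in *. pose proof (alpha_le1 n y Hy x) as Hle.
    destruct (alpha n y x) as [|[|m]]; [| |lia];
    rewrite Ha, Hc, H0, !pow_split; destruct (eta x), (eta (x-1)%Z); simpl; ring.
Qed.

Lemma core_p theta (p : Z -> R) n y eta x :
  (forall i, (1 <= i)%nat -> (i < 2 * n)%nat -> (y i < y (S i))%Z) ->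
  p x * (theta * Sigma theta n y (eta_a eta (x-1)%Z x) + (1-theta) * Sigma theta n y (eta_c eta (x-1)%Z x)
         - Sigma theta n y eta)
  = sum_from (fun j => if Z.eqb (y j) x then
       p (y j) * (Sigma theta n (upd y j (y j - 1)%Z) eta - Sigma theta n y eta) else 0) 1 (2*n).
Proof.
  intros Hy.
  set (K := E n y (clr2 eta x)).
  pose proof (E_decomp n y eta eta x (fun _ _ _ => eq_refl)) as H0.
  pose proof (E_decomp n y eta (eta_a eta (x-1) x) x (fun w h1 h2 => eta_a_oth eta (x-1) x w h2 h1)) as Ha.
  pose proof (E_decomp n y eta (eta_c eta (x-1) x) x (fun w h1 h2 => eta_c_oth eta (x-1) x w h2 h1)) as Hc.
  rewrite eta_a_src, eta_a_tgt in Ha by lia. rewrite eta_c_src, eta_c_tgt in Hc by lia.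
  fold K in H0, Ha, Hc.
  rewrite !Sigma_pow.
  destruct (classic (exists j, (1 <= j <= 2*n)%nat /\ y j = x)) as [[j [Hj Hx]]|Hno].
  - rewrite (sum_from_one _ 1 (2*n) j) by
      (try lia; intros k Hk Hkj; destruct (Z.eqb_spec (y k) x); auto;
       exfalso; apply Hkj; apply (inj n y Hy); lia).
    rewrite Hx, Z.eqb_refl, !Sigma_pow.
    destruct (Nat.Even_or_Odd j) as [[i Hi]|[i Hi]].
    + subst j. destruct (alpha_even n y x i Hy ltac:(lia) Hx) as [A1 A0].
      rewrite A1, A0 in *.
      pose proof (E_upd_even n y eta i (x-1) ltac:(lia)) as HU.
      pose proof (mono n y Hy (2*i)%nat (2*i-1)%nat ltac:(lia) ltac:(lia) ltac:(lia)) as Hm.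
      rewrite Hx in HU, Hm. pose proof (occ_right eta (y (2*i-1)%nat) (x-1) ltac:(lia)) as HR.
      replace (x - 1 + 1)%Z with x in HR by ring.
      assert (HU' : E n (upd y (2 * i) (x - 1)) eta = K) by lia.
      rewrite HU', Ha, Hc, H0, !pow_split.
      destruct (eta x), (eta (x-1)%Z); simpl; ring.
    + subst j. replace (2*i+1)%nat with (2*(S i)-1)%nat in * by lia.
      destruct (alpha_odd n y x (S i) Hy ltac:(lia) Hx) as [A1 A0].
      rewrite A1, A0 in *.
      pose proof (E_upd_odd n y eta (S i) (x-1) ltac:(lia)) as HU.
      pose proof (mono n y Hy (2*S i)%nat (2*S i-1)%nat ltac:(lia) ltac:(lia) ltac:(lia)) as Hm.
      rewrite Hx in HU, Hm. pose proof (occ_left eta (x-1) (y (2*S i)%nat) ltac:(lia)) as HL.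
      replace (x - 1 + 1)%Z with x in HL by ring.
      assert (HU' : E n (upd y (2 * S i - 1) (x - 1)) eta = (K + (Nat.b2n (eta x) + Nat.b2n (eta (x-1)%Z)))%nat) by lia.
      rewrite HU', Ha, Hc, H0, !pow_split.
      destruct (eta x), (eta (x-1)%Z); simpl; ring.
  - rewrite sum_from_zero.
    2:{ intros k Hk. destruct (Z.eqb_spec (y k) x); auto. exfalso; apply Hno; exists k; split; auto; lia. }
    assert (HA : alpha n y (x-1)%Z = alpha n y x)
      by (apply alpha_none; intros j Hj h; apply Hno; exists j; auto).
    rewrite HA in *. pose proof (alpha_le1 n y Hy x) as Hle.
    destruct (alpha n y x) as [|[|m]]; [| |lia];
    rewrite Ha, Hc, H0, !pow_split; destruct (eta x), (eta (x-1)%Z); simpl; ring.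
Qed.

Lemma zpartial_plus f g N : zpartial (fun x => f x + g x) N = zpartial f N + zpartial g N.
Proof. unfold zpartial. exact (sum_from_plus _ _ _ _). Qed.

Lemma zlim_delta (c : Z) (v : R) :
  is_lim_seq (zpartial (fun x => if Z.eqb c x then v else 0)) v.
Proof.
  apply is_lim_seq_ext_loc with (u := fun _ => v); [|apply is_lim_seq_const].
  exists (Z.to_nat (Z.abs c)). intros N HN. unfold zpartial.
  rewrite (sum_from_one _ 0 (S (2*N)) (Z.to_nat (c + Z.of_nat N))).
  - replace (Z.of_nat (Z.to_nat (c + Z.of_nat N)) - Z.of_nat N)%Z with c by lia.
    rewrite Z.eqb_refl. auto.
  - lia.
  - intros k Hk Hkj. destruct (Z.eqb_spec c (Z.of_nat k - Z.of_nat N)); auto. lia.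
Qed.

Lemma zlim_sum (y : nat -> Z) (c : nat -> R) len : forall a,
  is_lim_seq (zpartial (fun x => sum_from (fun j => if Z.eqb (y j) x then c j else 0) a len))
    (sum_from c a len).
Proof.
  induction len; intros a; simpl.
  - apply is_lim_seq_ext with (u := fun _ => 0); [|apply is_lim_seq_const].
    intros N. unfold zpartial. symmetry. apply sum_from_zero. auto.
  - apply is_lim_seq_ext with
      (u := fun N => zpartial (fun x => if Z.eqb (y a) x then c a else 0) N
          + zpartial (fun x => sum_from (fun j => if Z.eqb (y j) x then c j else 0) (S a) len) N).
    + intros N. symmetry. apply zpartial_plus.
    + apply is_lim_seq_plus'. apply zlim_delta. apply IHlen.
Qed.

Lemma zsum_sum (y : nat -> Z) (c : nat -> R) a len :
  zsum (fun x => sum_from (fun j => if Z.eqb (y j) x then c j else 0) a len) = sum_from c a len.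
Proof. unfold zsum. rewrite (is_lim_seq_unique _ _ (zlim_sum y c len a)). auto. Qed.

Theorem lemma1 (theta : R) (p q : Z -> R) (n : nat) (y : nat -> Z) :
  0 <= theta <= 1 ->
  (forall x, 0 <= p x) -> (forall x, 0 <= q x) ->
  (exists M, forall x, p x <= M /\ q x <= M) ->
  (1 <= n)%nat ->
  (forall i, (1 <= i)%nat -> (i < 2 * n)%nat -> (y i < y (S i))%Z) ->
  forall eta : config,
    gen theta p q (Sigma theta n y) eta
    = sumR (fun i => L_on_var theta p q n y i eta) 1 (2 * n).
Proof.
  intros _ _ _ _ _ Hy eta. unfold gen.
  rewrite (functional_extensionality _ _ (fun x => core_q theta q n y eta x Hy)).
  rewrite (functional_extensionality _ _ (fun x => core_p theta p n y eta x Hy)).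
  rewrite !zsum_sum, <- sum_from_plus. unfold sumR.
  replace (S (2*n) - 1)%nat with (2*n)%nat by lia.
  apply sum_from_ext. intros k _. unfold L_on_var, Lone.
  replace (upd y k (y k)) with y.
  - ring.
  - apply functional_extensionality. intros w. unfold upd. destruct (Nat.eqb_spec w k); subst; auto.
Qed.
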